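(* Let $\mathcal{X}$ be a finite set, let $P_X$ be a pmf on $\mathcal{X}$ with $P_X(x)>0$ for all $x$, and let $R_X\neq P_X$ be a pmf on $\mathcal{X}$. Write $J_X=R_X-P_X$ and $K_X(x)=J_X(x)/\sqrt{P_X(x)}$, so that $R_X=P_X+J_X=P_X+\mathrm{diag}(\sqrt{P_X})K_X$. Then $$\frac{D(R_X\|P_X)}{\|K_X\|_2^2\,\|J_X\|_1}\ge \frac{\phi\!\left(\max_{A\subseteq\mathcal{X}}\min\{P_X(A),1-P_X(A)\}\right)}{4\max_{x\in\mathcal{X}}\left|\frac{J_X(x)}{P_X(x)}\right|},$$ where $\phi:[0,\tfrac12]\to\mathbb{R}$ is $\phi(p)=\frac{1}{1-2p}\log\frac{1-p}{p}$ for $p\in[0,\tfrac12)$ and $\phi(\tfrac12)=2$.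
   Context: $D(R_X\|P_X)=\sum_x R_X(x)\log(R_X(x)/P_X(x))$ is the KL divergence (natural log). $P_X(A)=\sum_{x\in A}P_X(x)$. $\|\cdot\|_p$ denotes the $\ell^p$-norm. *)

(* Defs.v *)
From HB Require Import structures.
From mathcomp Require Import all_boot all_order all_algebra.
From mathcomp Require Import reals exp.
Set Implicit Arguments. Unset Strict Implicit. Unset Printing Implicit Defensive.
Import Order.TTheory GRing.Theory Num.Theory.
Local Open Scope ring_scope.

Section Defs.
Variables (R : realType) (T : finType).

Definition is_pmf (p : T -> R) : Prop :=
  (forall x, 0 <= p x) /\ \sum_(x : T) p x = 1.

Definition probA (p : T -> R) (A : {set T}) : R := \sum_(x in A) p x.

Definition KL (r p : T -> R) : R :=
  \sum_(x : T) (if r x == 0 then 0 else r x * ln (r x / p x)).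

Definition phi (q : R) : R :=
  if q == 2^-1 then 2 else (1 - 2 * q)^-1 * ln ((1 - q) / q).

Definition Jfun (r p : T -> R) (x : T) : R := r x - p x.
Definition Kfun (r p : T -> R) (x : T) : R := Jfun r p x / Num.sqrt (p x).

Definition norm1 (f : T -> R) : R := \sum_(x : T) `|f x|.
Definition norm2sq (f : T -> R) : R := \sum_(x : T) f x ^+ 2.

(* max over subsets A of min(P(A), 1 - P(A)); all values are >= 0 *)
Definition balance (p : T -> R) : R :=
  \big[Num.max/0]_(A : {set T}) Num.min (probA p A) (1 - probA p A).

(* max_x |J(x)/P(x)|; all values are >= 0 *)
Definition maxratio (r p : T -> R) : R :=
  \big[Num.max/0]_(x : T) `|Jfun r p x / p x|.
End Defs.

(* Main.v *)
Require Import Defs.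
From HB Require Import structures.
From mathcomp Require Import all_boot all_order all_algebra.
From mathcomp Require Import reals exp.
From mathcomp Require Import all_classical all_reals all_analysis.
From mathcomp Require Import ring lra.
Import Order.TTheory GRing.Theory Num.Theory.
Local Open Scope ring_scope.

Section Calc.

Variable R : realType.

Lemma ln_le_sub1 (x : R) : 0 < x -> ln x <= x - 1.
Proof. move=> x0; have := @le_ln1Dx R (x - 1); have -> : 1 + (x - 1) = x by ring. apply; lra. Qed.

Lemma mvt01 (f df : R -> R) (a b : R) :
  (forall x : R, 0 < x -> x < 1 -> is_derive x 1 f (df x)) ->
  0 < a -> a < b -> b < 1 ->
  exists2 c, (a < c) && (c < b) & f b - f a = df c * (b - a).
Proof.
move=> hd a0 ab b1.
have [] := @MVT R f df a b ab.
- move=> x; rewrite in_itv /= => /andP[ax xb]; apply: hd; lra.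
- apply: derivable_within_continuous => x; rewrite in_itv /= => /andP[ax xb].
  by apply: ex_derive; apply: hd; lra.
- by move=> c; rewrite in_itv /= => cab e; exists c.
Qed.

Lemma der_ln1m (x : R) : x < 1 -> is_derive x 1 (fun q : R => ln (1 - q)) (- (1 - x)^-1).
Proof.
move=> x1.
have h3 : is_derive (1 - x) 1 (@ln R) (1-x)^-1 by apply: is_derive1_ln; rewrite subr_gt0.
have h4 : is_derive x 1 (fun q : R => 1 - q) (-1) by apply: is_derive_eq; rewrite add0r mul1r.
apply: (is_derive_eq (@is_derive1_comp _ (@ln R) (fun q => 1 - q) _ _ _ h3 h4)).
by rewrite mulrN1.
Qed.

Definition Hf (p c q : R) := q * ln q + (1 - q) * ln (1 - q) - q * ln p - (1 - q) * ln (1 - p) - c * (q - p)^+2.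
Definition Gf (c q : R) := ln q - ln (1 - q) - 2 * c * (q - 2^-1).
Definition Bf (q : R) := ln (1 - q) - ln q.

Lemma der_H (p c x : R) : c * (1 - 2 * p) = ln (1 - p) - ln p -> 0 < x -> x < 1 ->
  is_derive x 1 (Hf p c) (Gf c x).
Proof.
move=> hc x0 x1.
have h1 : is_derive x 1 (@ln R) x^-1 by apply: is_derive1_ln.
have h2 := der_ln1m x x1.
rewrite /Hf.
apply: is_derive_eq.
rewrite /GRing.scale /= /Gf.
have -> : ln (1 - p) = c * (1 - 2 * p) + ln p by rewrite hc; ring.
have ? : 1 - x != 0 by rewrite subr_eq0 gt_eqF.
have ? : x != 0 by rewrite gt_eqF.
field; by apply/andP.
Qed.

Lemma der_G (c x : R) : 0 < x -> x < 1 ->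
  is_derive x 1 (Gf c) (x^-1 + (1 - x)^-1 - 2 * c).
Proof.
move=> x0 x1.
have h1 : is_derive x 1 (@ln R) x^-1 by apply: is_derive1_ln.
have h2 := der_ln1m x x1.
rewrite /Gf.
apply: is_derive_eq.
rewrite /GRing.scale /=.
by ring.
Qed.

Lemma der_B (x : R) : 0 < x -> x < 1 ->
  is_derive x 1 Bf (- (1 - x)^-1 - x^-1).
Proof.
move=> x0 x1.
have h1 : is_derive x 1 (@ln R) x^-1 by apply: is_derive1_ln.
have h2 := der_ln1m x x1.
rewrite /Bf.
apply: is_derive_eq.
by rewrite /GRing.scale /=.
Qed.


Definition mf (x : R) := x^-1 + (1 - x)^-1.

Lemma half_lt1 : (2^-1 : R) < 1. Proof. lra. Qed.
Lemma half_gt0 : (0 : R) < 2^-1. Proof. lra. Qed.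
Lemma one_minus_half : (1 - 2^-1 : R) = 2^-1. Proof. lra. Qed.

Lemma mf_eq (x : R) : 0 < x -> x < 1 -> mf x = (x * (1 - x))^-1.
Proof.
move=> x0 x1; rewrite /mf.
have ? : x != 0 by rewrite gt_eqF.
have ? : 1 - x != 0 by rewrite subr_eq0 gt_eqF.
field; by apply/andP.
Qed.

Lemma mf_anti (s t : R) : 0 < s -> s <= t -> t <= 2^-1 -> mf t <= mf s.
Proof.
move=> s0 st t2.
rewrite mf_eq; try lra. rewrite mf_eq; try lra.
rewrite lef_pV2 ?posrE; nra.
Qed.

Lemma mf_ge4 (x : R) : 0 < x -> x < 1 -> 4 <= mf x.
Proof.
move=> x0 x1; rewrite mf_eq //.
rewrite -[X in _ <= X]mul1r ler_pdivlMr; try nra.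
have : 0 <= (2 * x - 1) ^+ 2 by apply: sqr_ge0. nra.
Qed.

Lemma mf_half : mf (2^-1) = 4 :> R.
Proof. rewrite /mf one_minus_half; by field. Qed.

Lemma G_p (p c : R) : c * (1 - 2 * p) = ln (1 - p) - ln p -> Gf c p = 0.
Proof.
move=> hc; rewrite /Gf.
have -> : ln (1 - p) = c * (1 - 2 * p) + ln p by rewrite hc; ring.
by field.
Qed.

Lemma G_half (c : R) : Gf c 2^-1 = 0.
Proof. rewrite /Gf one_minus_half; by field. Qed.

Lemma der_G' (c x : R) : 0 < x -> x < 1 -> is_derive x 1 (Gf c) (mf x - 2 * c).
Proof. exact: der_G. Qed.

Lemma G_neg (p c t : R) : 0 < p -> p <= 2^-1 ->
  c * (1 - 2 * p) = ln (1 - p) - ln p -> (p = 2^-1 -> c = 2) ->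
  0 < t -> t < p -> Gf c t <= 0.
Proof.
move=> p0 p2 hc hc2 t0 tp.
have [x /andP[px x2] hx] : exists2 x, (p <= x) && (x <= 2^-1) & 0 <= mf x - 2 * c.
  case: (ltP p 2^-1) => hp.
  - have [x /andP[px x2] e] := @mvt01 (Gf c) (fun x => mf x - 2 * c) p 2^-1
       (@der_G' c) p0 hp half_lt1.
    move: e; rewrite G_half G_p // subrr => /esym /eqP.
    rewrite mulf_eq0 => /orP[/eqP e|]; last by rewrite subr_eq0 gt_eqF.
    by exists x; [rewrite !ltW | rewrite e].
  - have pe : p = 2^-1 by apply/eqP; rewrite eq_le p2 hp.
    exists 2^-1; first by rewrite pe lexx.
    by rewrite mf_half hc2 //; lra.
have [y /andP[ty yp] e] := @mvt01 (Gf c) (fun x => mf x - 2 * c) t p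
       (@der_G' c) t0 tp (le_lt_trans p2 half_lt1).
move: e; rewrite G_p // => e.
have : mf x <= mf y by apply: mf_anti; lra.
nra.
Qed.

Lemma G_pos (p c t : R) : 0 < p ->
  c * (1 - 2 * p) = ln (1 - p) - ln p ->
  p < t -> t < 2^-1 -> 0 <= Gf c t.
Proof.
move=> p0 hc pt t2.
have [y /andP[py yt] e1] := @mvt01 (Gf c) (fun x => mf x - 2 * c) p t
       (@der_G' c) p0 pt (lt_trans t2 half_lt1).
have [z /andP[tz z2] e2] := @mvt01 (Gf c) (fun x => mf x - 2 * c) t 2^-1
       (@der_G' c) (lt_trans p0 pt) t2 half_lt1.
move: e1 e2; rewrite (@G_p p c hc) G_half => e1 e2.
have hzy : mf z <= mf y by apply: mf_anti; lra.
case: (lerP 0 (Gf c t)) => // glt.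
have ha : mf y - 2 * c < 0.
  by rewrite -(@pmulr_llt0 _ (t - p)) ?subr_gt0 // -e1 subr0.
have hb : 0 < mf z - 2 * c.
  by rewrite -(@pmulr_lgt0 _ (2^-1 - t)) ?subr_gt0 // -e2 sub0r oppr_gt0.
lra.
Qed.

Lemma H_p (p c : R) : Hf p c p = 0.
Proof. rewrite /Hf; ring. Qed.

Lemma H_sym (p c q : R) : c * (1 - 2 * p) = ln (1 - p) - ln p ->
  Hf p c (1 - q) = Hf p c q.
Proof.
move=> hc; rewrite /Hf.
have -> : 1 - (1 - q) = q by ring.
have -> : ln (1 - p) = c * (1 - 2 * p) + ln p by rewrite hc; ring.
ring.
Qed.

Lemma H_pos (p c q : R) : 0 < p -> p <= 2^-1 ->
  c * (1 - 2 * p) = ln (1 - p) - ln p -> (p = 2^-1 -> c = 2) ->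
  0 < q -> q <= 2^-1 -> 0 <= Hf p c q.
Proof.
move=> p0 p2 hc hc2 q0 q2.
case: (ltgtP q p) => [qp|pq|->]; last by rewrite H_p.
- have [y /andP[qy yp] e] := @mvt01 (Hf p c) (Gf c) q p
       (@der_H p c ^~ hc) q0 qp (le_lt_trans p2 half_lt1).
  move: e; rewrite H_p => e.
  have hg := @G_neg p c y p0 p2 hc hc2 (lt_trans q0 qy) yp.
  have hpq : 0 <= p - q by lra.
  have := mulr_le0_ge0 hg hpq.
  lra.
- have [y /andP[py yq] e] := @mvt01 (Hf p c) (Gf c) p q
       (@der_H p c ^~ hc) p0 pq (le_lt_trans q2 half_lt1).
  move: e; rewrite H_p => e.
  have hg := @G_pos p c y p0 hc py (lt_le_trans yq q2).
  have hpq : 0 <= q - p by lra.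
  have := mulr_ge0 hg hpq.
  lra.
Qed.

Lemma H_zero (p c : R) : 0 < p -> p <= 2^-1 ->
  c * (1 - 2 * p) = ln (1 - p) - ln p -> (p = 2^-1 -> c = 2) -> 0 <= c ->
  0 <= Hf p c 0.
Proof.
move=> p0 p2 hc hc2 c0.
set K := ln (1 - p) - ln p + 2 * c * p.
have K0 : 0 <= K.
  have : ln p <= ln (1 - p) by rewrite ler_ln ?posrE; lra.
  have : 0 <= c * p by apply: mulr_ge0 => //; lra.
  rewrite /K; lra.
have e0 : Hf p c 0 = - ln (1 - p) - c * p ^+ 2 by rewrite /Hf subr0 ln1; ring.
have key : forall e, 0 < e -> e < p -> 0 <= Hf p c 0 + e * K.
  move=> e ep0 ep.
  have hH := @H_pos p c e p0 p2 hc hc2 ep0 (ltW (lt_le_trans ep p2)).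
  have eq : Hf p c e = Hf p c 0 + e * K + (e * ln e + (1 - e) * ln (1 - e) - c * e ^+ 2).
    by rewrite e0 /Hf /K; ring.
  have h1 : e * ln e <= 0 by apply: mulr_ge0_le0; [lra | apply: ln_le0; lra].
  have h2 : (1 - e) * ln (1 - e) <= 0 by apply: mulr_ge0_le0; [lra | apply: ln_le0; lra].
  have h3 : 0 <= c * e ^+ 2 by apply: mulr_ge0 => //; apply: sqr_ge0.
  lra.
case: (lerP 0 (Hf p c 0)) => // Xlt.
set X := Hf p c 0 in Xlt key.
set e := Num.min (p / 2) (- X / (K + 1)).
have hX : 0 < - X / (K + 1) by apply: divr_gt0; lra.
have ep0 : 0 < e by rewrite lt_min hX andbT; lra.
have ep : e < p by rewrite /e gt_min; apply/orP; left; lra.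
have eK : e * K <= (- X / (K + 1)) * K.
  by apply: ler_wpM2r => //; rewrite /e ge_min lexx orbT.
have : (- X / (K + 1)) * K = - X - (- X / (K + 1)).
  have ? : K + 1 != 0 by rewrite gt_eqF //; lra.
  by field.
have := key e ep0 ep.
lra.
Qed.

Lemma H_all (p c q : R) : 0 < p -> p <= 2^-1 ->
  c * (1 - 2 * p) = ln (1 - p) - ln p -> (p = 2^-1 -> c = 2) -> 0 <= c ->
  0 <= q -> q <= 1 -> 0 <= Hf p c q.
Proof.
move=> p0 p2 hc hc2 c0 q0 q1.
have half : forall q, 0 <= q -> q <= 2^-1 -> 0 <= Hf p c q.
  move=> r r0 r2; case: (ltgtP r 0) => [|r0'|->]; first by lra.
  - exact: H_pos.
  - exact: H_zero.
case: (lerP q 2^-1) => hq; first exact: half.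
rewrite -(@H_sym p c q hc); apply: half; lra.
Qed.

Definition Db (p q : R) := q * ln (q / p) + (1 - q) * ln ((1 - q) / (1 - p)).

Lemma Db_H (p c q : R) : 0 < p -> p < 1 -> 0 <= q -> q <= 1 ->
  Db p q = Hf p c q + c * (q - p)^+2.
Proof.
move=> p0 p1 q0 q1.
have e1 : q * ln (q / p) = q * ln q - q * ln p.
  case: (ltgtP q 0) => [|q0'|->]; first lra; last by rewrite !mul0r subrr.
  by rewrite ln_div ?posrE // mulrBr.
have e2 : (1 - q) * ln ((1 - q) / (1 - p)) = (1 - q) * ln (1 - q) - (1 - q) * ln (1 - p).
  case: (ltgtP (1 - q) 0) => [|q0'|->]; first lra; last by rewrite !mul0r subrr.
  by rewrite ln_div ?posrE ?mulrBr //; lra.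
rewrite /Db e1 e2 /Hf; ring.
Qed.

Lemma phi_lt (x : R) : x != 2^-1 -> 0 < x -> x < 1 -> phi x = (1 - 2 * x)^-1 * Bf x.
Proof. move=> xh x0 x1; rewrite /phi (negbTE xh) /Bf ln_div ?posrE //; lra. Qed.

Lemma phi_half : phi (2^-1 : R) = 2.
Proof. by rewrite /phi eqxx. Qed.

Lemma phi_hc (p : R) : 0 < p -> p <= 2^-1 -> phi p * (1 - 2 * p) = ln (1 - p) - ln p.
Proof.
move=> p0 p2; case: (eqVneq p 2^-1) => [->|ph].
  rewrite phi_half one_minus_half subrr.
  have -> : (1 - 2 * 2^-1 : R) = 0 by field.
  by rewrite mulr0.
rewrite phi_lt //; last by lra.
have ? : 1 - 2 * p != 0.
  rewrite subr_eq0; apply/eqP => e; move/eqP: ph; apply; lra.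
by rewrite /Bf; field.
Qed.

Lemma der_B' (x : R) : 0 < x -> x < 1 -> is_derive x 1 Bf (- mf x).
Proof.
move=> x0 x1; apply: (is_derive_eq (der_B x x0 x1)); rewrite /mf; ring.
Qed.

Lemma B_half : Bf (2^-1 : R) = 0.
Proof. by rewrite /Bf one_minus_half subrr. Qed.

Lemma phi_ge2 (a : R) : 0 < a -> a <= 2^-1 -> 2 <= phi a.
Proof.
move=> a0 a2; case: (eqVneq a 2^-1) => [->|ah]; first by rewrite phi_half.
have a2' : a < 2^-1 by rewrite lt_neqAle ah.
have [y /andP[ay y2] e] := @mvt01 Bf (fun x => - mf x) a 2^-1 der_B' a0 a2' half_lt1.
move: e; rewrite B_half => e.
have h4 := mf_ge4 y (lt_trans a0 ay) (lt_trans y2 half_lt1).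
have h4' := @ler_wpM2r _ (2^-1 - a) ltac:(lra) _ _ h4.
rewrite phi_lt //; last by lra.
rewrite mulrC ler_pdivlMr; last by lra.
lra.
Qed.

Lemma phi_mono (a b : R) : 0 < a -> a <= b -> b <= 2^-1 -> phi b <= phi a.
Proof.
move=> a0 ab b2.
case: (eqVneq b 2^-1) => [->|bh].
  by rewrite phi_half; apply: phi_ge2; lra.
have b2' : b < 2^-1 by rewrite lt_neqAle bh.
case: (ltgtP a b) ab => // [ab' _|-> _]; last by [].
have [y /andP[ay yb] e1] := @mvt01 Bf (fun x => - mf x) a b der_B' a0 ab' (lt_trans b2' half_lt1).
have [z /andP[bz z2] e2] := @mvt01 Bf (fun x => - mf x) b 2^-1 der_B' (lt_trans a0 ab') b2' half_lt1.
move: e2; rewrite B_half => e2.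
have hzy : mf z <= mf y by apply: mf_anti; lra.
have hint : 0 <= (mf y - mf z) * ((b - a) * (1 - 2 * b)).
  by apply: mulr_ge0; [lra | apply: mulr_ge0; lra].
have eb : Bf b = mf z * (2^-1 - b) by lra.
have ea : Bf a = mf z * (2^-1 - b) + mf y * (b - a) by lra.
have key : Bf b * (1 - 2 * a) <= Bf a * (1 - 2 * b).
  rewrite ea eb. lra.
have ah : a != 2^-1 by rewrite lt_eqF // (lt_trans ab' b2').
rewrite !phi_lt //; try lra.
have ? : 1 - 2 * a != 0 by rewrite gt_eqF //; lra.
have ? : 1 - 2 * b != 0 by rewrite gt_eqF //; lra.
have -> : (1 - 2 * b)^-1 * Bf b = (Bf b * (1 - 2 * a)) * ((1 - 2 * a) * (1 - 2 * b))^-1.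
  by field; repeat (apply/andP; split).
have -> : (1 - 2 * a)^-1 * Bf a = (Bf a * (1 - 2 * b)) * ((1 - 2 * a) * (1 - 2 * b))^-1.
  by field; repeat (apply/andP; split).
apply: ler_wpM2r => //.
by rewrite invr_ge0; apply: mulr_ge0; lra.
Qed.

Lemma bin_bound (p q : R) : 0 < p -> p < 1 -> 0 <= q -> q <= 1 ->
  phi (Num.min p (1 - p)) * (q - p) ^+ 2 <= Db p q.
Proof.
have main : forall p q : R, 0 < p -> p <= 2^-1 -> 0 <= q -> q <= 1 ->
    phi p * (q - p) ^+ 2 <= Db p q.
  move=> p' q' p0 p2 q0 q1.
  rewrite (@Db_H p' (phi p') q') //; last by lra.
  rewrite lerDr.
  apply: H_all => //.
  - exact: phi_hc.
  - by move=> ->; rewrite phi_half.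
  - have := phi_ge2 p' p0 p2; lra.
move=> p0 p1 q0 q1.
case: (lerP p 2^-1) => hp.
  by rewrite min_l; [exact: main | lra].
rewrite min_r; last by lra.
have -> : Db p q = Db (1 - p) (1 - q).
  rewrite /Db.
  have -> : 1 - (1 - q) = q by ring.
  have -> : 1 - (1 - p) = p by ring.
  by rewrite addrC.
have -> : (q - p) ^+ 2 = ((1 - q) - (1 - p)) ^+ 2 by ring.
apply: main; lra.
Qed.

Lemma logsum_pt (a b k : R) : 0 <= a -> 0 < b -> 0 < k ->
  a * ln k + a - b * k <= a * ln (a / b).
Proof.
move=> a0 b0 k0.
case: (ltgtP a 0) => [|ap|->]; first lra; last first.
  rewrite !mul0r; have := mulr_gt0 b0 k0; lra.
have h := @ln_le_sub1 (b * k / a) (divr_gt0 (mulr_gt0 b0 k0) ap).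
have hs : ln (a / b) + ln (b * k / a) = ln k.
  rewrite -lnM ?posrE; [|exact: divr_gt0|exact: divr_gt0 (mulr_gt0 b0 k0) ap].
  congr ln.
  have ? : a != 0 by rewrite gt_eqF.
  have ? : b != 0 by rewrite gt_eqF.
  by field; apply/andP.
have h2 := ler_wpM2l (ltW ap) h.
have e : a * (b * k / a - 1) = b * k - a.
  have ? : a != 0 by rewrite gt_eqF.
  by field.
rewrite e in h2.
have -> : ln k = ln (a / b) + ln (b * k / a) by rewrite hs.
lra.
Qed.

Section Fin.
Variable T : finType.

Lemma logsum (P : pred T) (r p : T -> R) : (forall x, 0 <= r x) -> (forall x, 0 < p x) ->
  (\sum_(x | P x) r x) * ln ((\sum_(x | P x) r x) / (\sum_(x | P x) p x))
  <= \sum_(x | P x) r x * ln (r x / p x).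
Proof.
move=> hr hp.
case: (eqVneq (\sum_(x | P x) r x) 0) => [rS0|rSn0].
  rewrite rS0 mul0r.
  have h := psumr_eq0P (fun i _ => hr i) rS0.
  rewrite big1 // => x Px; by rewrite (h x Px) mul0r.
have rS0 : 0 < \sum_(x | P x) r x.
  by rewrite lt_def rSn0 /=; apply: sumr_ge0 => i _; exact: hr.
case: (pickP P) => [x0 Px0|none]; last first.
  by move: rSn0; rewrite big_pred0 ?eqxx.
have pS0 : 0 < \sum_(x | P x) p x.
  rewrite (bigD1 x0) //=; apply: (lt_le_trans (hp x0)); rewrite lerDl.
  by apply: sumr_ge0 => i _; exact: ltW.
set rS := \sum_(x | P x) r x in rS0 rSn0 *.
set pS := \sum_(x | P x) p x in pS0 *.
have k0 : 0 < rS / pS by apply: divr_gt0.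
apply: (@le_trans _ _ (\sum_(x | P x) (r x * ln (rS / pS) + r x - p x * (rS / pS)))).
  rewrite sumrB big_split /= -!mulr_suml -/rS -/pS.
  have -> : pS * (rS / pS) = rS by field; rewrite gt_eqF.
  by rewrite addrK.
by apply: ler_sum => x _; apply: logsum_pt.
Qed.

Lemma le_bigmax0 (I : finType) (F : I -> R) i : F i <= \big[Num.max/0]_(j : I) F j.
Proof.
have : i \in index_enum I by rewrite mem_index_enum.
elim: (index_enum I) => // x s IH.
rewrite inE big_cons le_max => /orP[/eqP->|/IH->]; by rewrite ?lexx ?orbT.
Qed.

Lemma sum_ge_term (I : finType) (F : I -> R) x0 : (forall x, 0 <= F x) -> F x0 <= \sum_x F x.
Proof.
move=> h; rewrite (bigD1 x0) //= lerDl; by apply: sumr_ge0 => i _.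
Qed.

Lemma sum_pos (I : finType) (F : I -> R) x0 : (forall x, 0 <= F x) -> 0 < F x0 -> 0 < \sum_x F x.
Proof. by move=> h h0; apply: (lt_le_trans h0); apply: sum_ge_term. Qed.

End Fin.

End Calc.

Theorem lemma2 (R : realType) (T : finType) (Px Rx : T -> R)
  (hP : is_pmf Px) (hPpos : forall x, 0 < Px x)
  (hR : is_pmf Rx) (hne : Rx <> Px) :
  phi (balance Px) / (4 * maxratio Rx Px)
    <= KL Rx Px / (norm2sq (Kfun Rx Px) * norm1 (Jfun Rx Px)).
Proof.
case: hP => hP0 hP1; case: hR => hR0 hR1.
set A := [set x | Px x < Rx x].
set q := \sum_(x in A) Rx x.
set p := probA Px A.
have split : forall F : T -> R, \sum_x F x = \sum_(x in A) F x + \sum_(x | x \notin A) F x.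
  by move=> F; rewrite (bigID (fun x => x \in A)).
have sR : \sum_(x | x \notin A) Rx x = 1 - q.
  have := split Rx; rewrite hR1 => e; rewrite /q; lra.
have sP : \sum_(x | x \notin A) Px x = 1 - p.
  have := split Px; rewrite hP1 => e; rewrite /p /probA; lra.
have N1e : norm1 (Jfun Rx Px) = 2 * (q - p).
  rewrite /norm1 split.
  have e1 : \sum_(x in A) `|Jfun Rx Px x| = q - p.
    rewrite /q /p /probA -sumrB; apply: eq_bigr => x; rewrite /A inE => hx.
    by rewrite /Jfun gtr0_norm // subr_gt0.
  have e2 : \sum_(x | x \notin A) `|Jfun Rx Px x| = (1 - p) - (1 - q).
    rewrite -sR -sP -sumrB; apply: eq_bigr => x; rewrite /A inE -leNgt => hx.
    by rewrite /Jfun ler0_norm ?opprB // subr_le0.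
  rewrite e1 e2; ring.
have [x0 hx0] : exists x, Rx x != Px x.
  case: (boolP [exists x, Rx x != Px x]) => [/existsP //|/existsPn h].
  by elim: hne; apply: boolp.funext => x; apply/eqP; have := h x; rewrite negbK.
have N1pos : 0 < norm1 (Jfun Rx Px).
  apply: (@sum_pos R T (fun x => `|Jfun Rx Px x|) x0) => //.
  by rewrite normr_gt0 /Jfun subr_eq0.
have qp : 0 < q - p by move: N1pos; rewrite N1e; lra.
have p0 : 0 < p.
  case: (pickP (fun x => x \in A)) => [x1 hx1|none].
    rewrite /p /probA (bigD1 x1) //=; apply: (lt_le_trans (hPpos x1)).
    by rewrite lerDl; apply: sumr_ge0 => i _.
  by move: qp; rewrite /q /p /probA !big_pred0 // subrr ltxx.
have p1 : p < 1.
  case: (pickP (fun x => x \notin A)) => [x1 hx1|none].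
    suff : 0 < 1 - p by lra.
    rewrite -sP (bigD1 x1) //=; apply: (lt_le_trans (hPpos x1)).
    by rewrite lerDl; apply: sumr_ge0 => i _.
  by move: sR sP; rewrite !big_pred0 // => sR sP; lra.
have q1 : q <= 1.
  suff : 0 <= 1 - q by lra.
  by rewrite -sR; apply: sumr_ge0.
have q0 : 0 <= q by lra.
have KLe : KL Rx Px = \sum_x Rx x * ln (Rx x / Px x).
  rewrite /KL; apply: eq_bigr => x _; case: eqP => [->|//]; by rewrite mul0r.
have l1 : q * ln (q / p) <= \sum_(x in A) Rx x * ln (Rx x / Px x).
  exact: (@logsum R T (fun x => x \in A) Rx Px hR0 hPpos).
have l2 := @logsum R T (fun x => x \notin A) Rx Px hR0 hPpos.
rewrite /= sR sP in l2.
have hKL : Db R p q <= KL Rx Px by rewrite KLe split /Db; lra.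
have hb := @bin_bound R p q p0 p1 q0 q1.
set m := Num.min p (1 - p) in hb.
have m0 : 0 < m by rewrite lt_min p0 /=; lra.
have hm : m <= balance Px.
  exact: (@le_bigmax0 R {set T} (fun B => Num.min (probA Px B) (1 - probA Px B)) A).
have hbh : balance Px <= 2^-1.
  rewrite /balance; apply: (big_ind (fun v => v <= 2^-1)).
  - lra.
  - by move=> x y hx hy; rewrite ge_max hx hy.
  - by move=> B _ /=; case: (lerP (probA Px B) (1 - probA Px B)) => h; lra.
have hphi := @phi_mono R m (balance Px) m0 hm hbh.
have hphi2 := @phi_ge2 R (balance Px) (lt_le_trans m0 hm) hbh.
set B := balance Px in hm hbh hphi hphi2 *.
set M := maxratio Rx Px.
have hM : forall x, `|Jfun Rx Px x / Px x| <= M.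
  by move=> x; exact: (@le_bigmax0 R T (fun x => `|Jfun Rx Px x / Px x|) x).
have hJx0 : Jfun Rx Px x0 != 0 by rewrite /Jfun subr_eq0.
have M0 : 0 < M.
  apply: (lt_le_trans _ (hM x0)).
  by rewrite normr_gt0 mulf_neq0 // invr_neq0 // gt_eqF.
have hK : forall x, Kfun Rx Px x ^+ 2 = `|Jfun Rx Px x / Px x| * `|Jfun Rx Px x|.
  move=> x; rewrite /Kfun expr_div_n sqr_sqrtr ?(ltW (hPpos x)) // -normrM.
  have -> : Jfun Rx Px x / Px x * Jfun Rx Px x = Jfun Rx Px x ^+ 2 / Px x.
    by rewrite expr2 mulrAC.
  rewrite ger0_norm //; apply: divr_ge0; [exact: sqr_ge0 | exact: ltW].
have N2le : norm2sq (Kfun Rx Px) <= M * norm1 (Jfun Rx Px).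
  rewrite /norm2sq /norm1 mulr_sumr; apply: ler_sum => x _.
  by rewrite hK; apply: ler_wpM2r => //.
have N2pos : 0 < norm2sq (Kfun Rx Px).
  apply: (@sum_pos R T (fun x => Kfun Rx Px x ^+ 2) x0); first by move=> x; exact: sqr_ge0.
  rewrite hK; apply: mulr_gt0; rewrite normr_gt0 //.
  by rewrite mulf_neq0 // invr_neq0 // gt_eqF.
set N1 := norm1 (Jfun Rx Px) in N1e N1pos N2le *.
set N2 := norm2sq (Kfun Rx Px) in N2le N2pos *.
have hD : phi B * (q - p) ^+ 2 <= KL Rx Px.
  apply: le_trans hKL; apply: le_trans hb.
  by apply: ler_wpM2r => //; exact: sqr_ge0.
rewrite ler_pdivlMr; last exact: mulr_gt0.
apply: (@le_trans _ _ (phi B / (4 * M) * (M * N1 * N1))).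
  apply: ler_wpM2l.
    apply: divr_ge0; first lra. by apply: mulr_ge0; lra.
  by apply: ler_wpM2r => //; exact: ltW.
have -> : phi B / (4 * M) * (M * N1 * N1) = phi B * (q - p) ^+ 2.
  rewrite N1e; have ? : M != 0 by rewrite gt_eqF.
  by field.
exact: hD.
Qed.
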